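(* There exists a probability distribution $\gamma$ on $\mathbb{Z}_7$ such that $\hat{\gamma}(3)=\hat{\gamma}(-3)$ and the random walk on $\mathbb{Z}_7$ with step distribution $\gamma$ is reconstructive.
   Context: $\hat{\gamma}(x)=\sum_{k\in\mathbb{Z}_7}\omega_7^{kx}\gamma(k)$ with $\omega_7=e^{-2\pi i/7}$. The random walk has $v(1)$ uniform on $\mathbb{Z}_7$ and independent steps with $\mathbb{P}(v(t+1)-v(t)=k)=\gamma(k)$. It is reconstructive if, for any two labelings $f_1,f_2:\mathbb{Z}_7\to\{0,1\}$, the distributions of $\{f_1(v(t))\}_{t\ge1}$ and $\{f_2(v(t))\}_{t\ge1}$ coincide only if there is $\ell$ with $f_1(k)=f_2(k+\ell)$ for all $k$. *)

(* Defs.v *)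
From HB Require Import structures.
From mathcomp Require Import all_boot all_order all_algebra.
From mathcomp Require Import complex.
From mathcomp Require Import reals trigo.
Set Implicit Arguments. Unset Strict Implicit. Unset Printing Implicit Defensive.
Import Order.TTheory GRing.Theory Num.Theory.
Local Open Scope ring_scope.
Local Open Scope complex_scope.

Section Walk.
Variable R : realType.

Definition is_distr (gamma : 'Z_7 -> R) : Prop :=
  (forall k, 0 <= gamma k) /\ \sum_(k : 'Z_7) gamma k = 1.

Definition omega7 : R[i] :=
  (cos (2 * pi / 7%:R))%:C - 'i * (sin (2 * pi / 7%:R))%:C.

(* \hat gamma(x) = \sum_k omega_7^{k x} gamma(k); the exponent k*x is
   computed in Z_7, which is legitimate since omega_7^7 = 1 *)
Definition fhat (gamma : 'Z_7 -> R) (x : 'Z_7) : R[i] :=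
  \sum_(k : 'Z_7) omega7 ^+ (nat_of_ord (k * x)) * (gamma k)%:C.

(* probability that, starting from state x, the labels f(v(2)),...,f(v(n+1))
   of the next n states equal the word w *)
Fixpoint walk_from (gamma : 'Z_7 -> R) (f : 'Z_7 -> bool) (x : 'Z_7)
  (w : seq bool) : R :=
  match w with
  | [::] => 1
  | b :: w' => \sum_(y : 'Z_7) gamma (y - x) * (f y == b)%:R * walk_from gamma f y w'
  end.

Definition word_prob (gamma : 'Z_7 -> R) (f : 'Z_7 -> bool) (w : seq bool) : R :=
  match w with
  | [::] => 1
  | b :: w' => \sum_(x : 'Z_7) 7%:R^-1 * (f x == b)%:R * walk_from gamma f x w'
  end.

(* the label processes {f1(v(t))} and {f2(v(t))} have the same distribution
   on {0,1}^N, i.e. the same finite-dimensional distributions *)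
Definition same_label_law (gamma : 'Z_7 -> R) (f1 f2 : 'Z_7 -> bool) : Prop :=
  forall w : seq bool, word_prob gamma f1 w = word_prob gamma f2 w.

Definition reconstructive (gamma : 'Z_7 -> R) : Prop :=
  forall f1 f2 : 'Z_7 -> bool, same_label_law gamma f1 f2 ->
    exists l : 'Z_7, forall k : 'Z_7, f1 k = f2 (k + l).

End Walk.

(* Main.v *)
Require Import Defs.
From HB Require Import structures.
From mathcomp Require Import all_boot all_order all_algebra.
From mathcomp Require Import complex.
From mathcomp Require Import reals trigo.
From mathcomp Require Import ring lra.
Import Order.TTheory GRing.Theory Num.Theory.
Local Open Scope ring_scope.

Section Comb.
Local Open Scope nat_scope.

Definition get (L : seq bool) (i : nat) : bool := nth false L (i %% 7).
Fixpoint supn (L : seq bool) (x : nat) (w : seq bool) : bool :=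
  match w with
  | [::] => true
  | b :: w' => ((get L (x + 1) == b) && supn L (x + 1) w') || ((get L (x + 2) == b) && supn L (x + 2) w')
  end.
Definition wsup (L : seq bool) (w : seq bool) : bool :=
  match w with
  | [::] => true
  | b :: w' => has (fun x => (get L x == b) && supn L x w') (iota 0 7)
  end.
Fixpoint allbl (n : nat) : seq (seq bool) :=
  match n with
  | 0 => [:: [::]]
  | n'.+1 => [seq b :: l | b <- [:: false; true], l <- allbl n']
  end.
Definition sig (L : seq bool) := map (wsup L) (allbl 6).
Definition rotok (L1 L2 : seq bool) :=
  has (fun l => all (fun k => get L1 k == get L2 (k + l)) (iota 0 7)) (iota 0 7).
Definition check : bool :=
  let S := [seq (L, sig L) | L <- allbl 7] in
  all (fun p1 => all (fun p2 => (p1.2 != p2.2) || rotok p1.1 p2.1) S) S.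
Lemma check_ok : check = true.
Proof. Time vm_compute. reflexivity. Qed.

End Comb.

Section T.
Local Open Scope complex_scope.
Variable R : realType.
Definition th : R := 2 * pi / 7%:R.

Lemma omega7E : omega7 R = Complex (cos th) (- sin th).
Proof. rewrite /omega7 /th; apply/eqP; rewrite eq_complex /=; apply/andP; split; apply/eqP; ring. Qed.

Lemma omega7X (n : nat) : omega7 R ^+ n = Complex (cos (n%:R * th)) (- sin (n%:R * th)).
Proof.
elim: n => [|n IH]; first by rewrite expr0 !mul0r cos0 sin0 oppr0.
rewrite exprS IH omega7E; apply/eqP; rewrite eq_complex /=.
rewrite -addn1 natrD mulrDl mul1r cosD sinD.
apply/andP; split; apply/eqP; ring.
Qed.

Lemma cos2piB a : cos (pi *+ 2 - a) = cos a :> R.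
Proof. by rewrite cosB cos2pi sin2pi mul1r mul0r addr0. Qed.
Lemma sin2piB a : sin (pi *+ 2 - a) = - sin a :> R.
Proof. by rewrite sinB cos2pi sin2pi mul1r mul0r sub0r. Qed.

Lemma th_gt0 : 0 < th. Proof. rewrite /th; have := pi_gt0 R; lra. Qed.
Lemma sin1_gt0 : 0 < sin th.
Proof. apply: sin_gt0_pi; rewrite /th; apply/andP; split; have := pi_gt0 R; lra. Qed.
Lemma sin3_gt0 : 0 < sin (3%:R * th).
Proof. apply: sin_gt0_pi; rewrite /th; apply/andP; split; have := pi_gt0 R; lra. Qed.
End T.


Section T.
Local Open Scope complex_scope.
Variable R : realType.
Definition Dn : R := sin (th R) + sin (3%:R * th R).
Definition pp : R := sin (th R) / Dn.
Definition qq : R := sin (3%:R * th R) / Dn.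
Definition gam (k : 'Z_7) : R := if k == 1 then pp else if k == 2 then qq else 0.

Lemma Dn_gt0 : 0 < Dn. Proof. rewrite /Dn; have := sin1_gt0 R; have := sin3_gt0 R; lra. Qed.
Lemma pp_gt0 : 0 < pp. Proof. by rewrite /pp divr_gt0 // ?Dn_gt0 // sin1_gt0. Qed.
Lemma qq_gt0 : 0 < qq. Proof. by rewrite /qq divr_gt0 // ?Dn_gt0 // sin3_gt0. Qed.
Lemma ppqq : pp + qq = 1.
Proof. rewrite /pp /qq -mulrDl divff //; exact: lt0r_neq0 Dn_gt0. Qed.

Lemma sum_gam (F : 'Z_7 -> R[i]) : \sum_k F k * (gam k)%:C = F 1 * pp%:C + F 2 * qq%:C.
Proof.
rewrite (bigD1 (1 : 'Z_7)) //= (bigD1 (2 : 'Z_7)) //= big1 ?addr0 ?addrA //.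
by move=> k /andP [/negbTE h2 /negbTE h1]; rewrite /gam h1 h2 mulr0.
Qed.

Lemma gam_distr : is_distr gam.
Proof.
split.
  move=> k; rewrite /gam; case: ifP => _; first exact: ltW pp_gt0.
  by case: ifP => _ //; exact: ltW qq_gt0.
rewrite (bigD1 (1 : 'Z_7)) //= (bigD1 (2 : 'Z_7)) //= big1 ?addr0 ?addrA ?ppqq //.
by move=> k /andP [/negbTE h2 /negbTE h1]; rewrite /gam h1 h2.
Qed.

Lemma fhat_eq : fhat gam 3 = fhat gam (- 3).
Proof.
rewrite /fhat !sum_gam.
have -> : nat_of_ord ((1 : 'Z_7) * 3) = 3%N by [].
have -> : nat_of_ord ((2 : 'Z_7) * 3) = 6%N by [].
have -> : nat_of_ord ((1 : 'Z_7) * - 3) = 4%N by [].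
have -> : nat_of_ord ((2 : 'Z_7) * - 3) = 1%N by [].
rewrite !omega7X.
have e4 : 4%:R * th R = pi *+ 2 - 3%:R * th R by rewrite /th mulr2n; field.
have e6 : 6%:R * th R = pi *+ 2 - 1%:R * th R by rewrite /th mulr2n; field.
rewrite e4 e6 cos2piB sin2piB cos2piB sin2piB opprK.
apply/eqP; rewrite eq_complex /=; apply/andP; split; apply/eqP.
  ring.
rewrite /pp /qq mul1r; field.
exact: lt0r_neq0 Dn_gt0.
Qed.
End T.


Lemma mem_allbl n (l : seq bool) : size l = n -> l \in allbl n.
Proof.
elim: n l => [|n IH] [|b l] // [hs]; rewrite [allbl _]/=.
by rewrite !mem_cat; case: b; rewrite map_f ?orbT //; apply: IH.
Qed.

Lemma check_use L1 L2 : size L1 = 7%N -> size L2 = 7%N -> sig L1 = sig L2 -> rotok L1 L2.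
Proof.
move=> s1 s2 e; move: check_ok; rewrite /check => /allP /(_ (L1, sig L1)).
rewrite map_f ?mem_allbl // => /(_ isT) /allP /(_ (L2, sig L2)).
by rewrite map_f ?mem_allbl // => /(_ isT) /=; rewrite e eqxx.
Qed.

Lemma supn_eq L w : forall x y, (x %% 7 = y %% 7)%N -> supn L x w = supn L y w.
Proof.
elim: w => [|b w IH] x y hxy //=.
have h1 : ((x + 1) %% 7 = (y + 1) %% 7)%N by rewrite -modnDml hxy modnDml.
have h2 : ((x + 2) %% 7 = (y + 2) %% 7)%N by rewrite -modnDml hxy modnDml.
by rewrite /get h1 h2 (IH _ _ h1) (IH _ _ h2).
Qed.

Lemma supn_mod L x w : supn L (x %% 7)%N w = supn L x w.
Proof. by apply: supn_eq; rewrite modn_mod. Qed.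

Section S.
Variable R : realType.

Definition Lf (f : 'Z_7 -> bool) : seq bool := [seq f (inZp i : 'Z_7) | i <- iota 0 7].

Lemma size_Lf f : size (Lf f) = 7%N.
Proof. by rewrite size_map size_iota. Qed.

Lemma get_Lf f i : get (Lf f) i = f (inZp i).
Proof.
rewrite /get (nth_map 0%N) ?size_iota ?ltn_pmod // nth_iota ?ltn_pmod // add0n.
by congr f; apply: val_inj => /=; rewrite modn_mod.
Qed.

Lemma get_Lf' f (x : 'Z_7) : get (Lf f) x = f x.
Proof. by rewrite get_Lf; congr f; apply: val_inj => /=; rewrite modn_small. Qed.

Lemma pos_add (u v : R) : 0 <= u -> 0 <= v -> (0 < u + v) = (0 < u) || (0 < v).
Proof.
move=> u0 v0; rewrite !lt0r paddr_eq0 // addr_ge0 // u0 v0 /= !andbT negb_and //.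
Qed.

Lemma pos_sum (F : 'Z_7 -> R) : (forall x, 0 <= F x) -> (0 < \sum_x F x) = [exists x, 0 < F x].
Proof.
move=> F0; rewrite lt0r sumr_ge0 // andbT psumr_neq0 //.
apply/hasP/existsP => [[x _ h]|[x h]]; first by exists x.
by exists x; rewrite ?mem_index_enum.
Qed.

Lemma sum_gamR (F : 'Z_7 -> R) : \sum_k gam R k * F k = pp R * F 1 + qq R * F 2.
Proof.
rewrite (bigD1 (1 : 'Z_7)) //= (bigD1 (2 : 'Z_7)) //= big1 ?addr0 ?addrA //.
by move=> k /andP [/negbTE h2 /negbTE h1]; rewrite /gam h1 h2 mul0r.
Qed.

Lemma gam_ge0 k : 0 <= gam R k.
Proof. by case: (gam_distr R) => h _; apply: h. Qed.

Lemma walk_ge0 f x w : 0 <= walk_from (gam R) f x w.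
Proof.
elim: w x => [|b w IH] x /=; first exact: ler01.
by apply: sumr_ge0 => y _; rewrite !mulr_ge0 ?gam_ge0 ?ler0n.
Qed.

Lemma bool_pos (c : bool) (W : R) : (0 < c%:R * W) = c && (0 < W).
Proof. by case: c; rewrite ?mul1r ?mul0r ?ltxx. Qed.

Lemma walk_pos f (x : 'Z_7) w : (0 < walk_from (gam R) f x w) = supn (Lf f) x w.
Proof.
elim: w x => [|b w IH] x /=; first exact: ltr01.
rewrite (reindex_inj (addrI x)) /=.
rewrite (eq_bigr (fun k => gam R k * ((f (x + k) == b)%:R * walk_from (gam R) f (x + k) w))); last first.
  by move=> k _; rewrite [x + k]addrC addrK mulrA.
rewrite sum_gamR pos_add; last 2 first.
- exact: mulr_ge0 (ltW (pp_gt0 R)) (mulr_ge0 (ler0n _ _) (walk_ge0 _ _ _)).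
- exact: mulr_ge0 (ltW (qq_gt0 R)) (mulr_ge0 (ler0n _ _) (walk_ge0 _ _ _)).
rewrite (pmulr_rgt0 _ (pp_gt0 R)) (pmulr_rgt0 _ (qq_gt0 R)) !bool_pos !IH.
have e1 : nat_of_ord (x + 1 : 'Z_7) = ((x + 1) %% 7)%N by [].
have e2 : nat_of_ord (x + 2 : 'Z_7) = ((x + 2) %% 7)%N by [].
rewrite -!get_Lf' e1 e2 !supn_mod /get !modn_mod.
by [].
Qed.

Lemma has_iota7 (P : nat -> bool) : has P (iota 0 7) = [exists x : 'Z_7, P x].
Proof.
apply/hasP/existsP => [[x]|[x h]].
  rewrite mem_iota add0n => /andP [_ hx] h.
  by exists (Ordinal hx).
by exists (nat_of_ord x); rewrite // mem_iota add0n ltn_ord.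
Qed.

Lemma word_pos f b w : (0 < word_prob (gam R) f (b :: w)) = wsup (Lf f) (b :: w).
Proof.
rewrite /word_prob pos_sum; last by move=> x; rewrite !mulr_ge0 ?invr_ge0 ?ler0n ?walk_ge0.
rewrite /wsup has_iota7; apply: eq_existsb => x.
rewrite -mulrA pmulr_rgt0 ?invr_gt0 ?ltr0n // bool_pos walk_pos get_Lf'.
by [].
Qed.

Lemma gam_recon : reconstructive (gam R).
Proof.
move=> f1 f2 hs.
have ew : forall w, wsup (Lf f1) w = wsup (Lf f2) w.
  by case=> [|b w] //; rewrite -!word_pos hs.
have := @check_use _ _ (size_Lf f1) (size_Lf f2) (eq_map ew (allbl 6)).
move=> /hasP [l]; rewrite mem_iota add0n => /andP [_ hl] /allP hk.
exists (inZp l) => k.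
have := hk k; rewrite mem_iota add0n ltn_ord => /(_ isT) /eqP.
rewrite get_Lf' get_Lf => ->; congr f2; apply: val_inj => /=.
by rewrite modnDmr.
Qed.
End S.

Theorem theorem6 (R : realType) :
  exists gamma : 'Z_7 -> R,
    is_distr gamma /\ fhat gamma 3 = fhat gamma (- 3) /\ reconstructive gamma.
Proof. exists (gam R); split; [exact: gam_distr | split; [exact: fhat_eq | exact: gam_recon]]. Qed.
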